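(* Let $p,q\in[1,\infty]$, let $\varphi_0,\varphi_1,\varphi$ be positive non-degenerate quasi-concave functions on $(0,\infty)$, let $\{\widetilde t_k\}_{k\in\mathbb Z}$ be a discretizing sequence for $\varphi(\varphi_0,\varphi_1)$ and $\{t_k\}_{k\in\mathbb Z}$ a discretizing sequence for $\varphi$. Then $$\left(l_q\Big(\frac1{\varphi_0(\widetilde t_k)}\Big),\,l_q\Big(\frac1{\varphi_1(\widetilde t_k)}\Big)\right)_{\varphi,p}=l_p\Big(l_q^{M_k}\Big(\frac1{\varphi(\varphi_0,\varphi_1)(\widetilde t_i)}\Big)\Big),$$ where $M_k=\{i:\ t_k\le \varphi_1(\widetilde t_i)/\varphi_0(\widetilde t_i)\le t_{k+1}\}$.
   Context: A function $\varphi:(0,\infty)\to(0,\infty)$ is non-degenerate quasi-concave if it is non-decreasing, $\varphi(t)/t$ is non-increasing, and $\lim_{t\to0+}\varphi(t)=\lim_{t\to\infty}\varphi(t)/t=\lim_{t\to0+}t/\varphi(t)=\lim_{t\to\infty}1/\varphi(t)=0$. $\varphi(\varphi_0,\varphi_1)(t)=\varphi_0(t)\varphi(\varphi_1(t)/\varphi_0(t))$. A positive sequence is strongly increasing if $\inf_k a_{k+1}/a_k\ge2$, strongly decreasing if $\sup_k a_{k+1}/a_k\le1/2$. A strongly increasing $\{s_k\}_{k\in\mathbb Z}$ is a discretizing sequence for a non-degenerate quasi-concave $\psi$ if $\{\psi(s_k)\}$ is strongly increasing, $\{\psi(s_k)/s_k\}$ is strongly decreasing, and $\mathbb Z=\mathbb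 Z_1\sqcup\mathbb Z_2$ with $\psi(s_{k+1})\le2\psi(s_k)$ for $k\in\mathbb Z_1$ and $\psi(s_k)/s_k\le2\psi(s_{k+1})/s_{k+1}$ for $k\in\mathbb Z_2$. For a Banach couple $\overline X$, $K(t,x;\overline X)=\inf_{x=x_0+x_1}(\|x_0\|_{X_0}+t\|x_1\|_{X_1})$, and $\overline X_{\varphi,p}$ is the space of $x\in X_0+X_1$ with $\big(\sum_k(K(t_k,x;\overline X)/\varphi(t_k))^p\big)^{1/p}<\infty$ (sup if $p=\infty$), where $\{t_k\}$ is the given discretizing sequence for $\varphi$. For a sequence space $E$ and positive weight $u$, $E(u)=\{a:\{a_iu_i\}\in E\}$ with norm $\|\{a_iu_i\}\|_E$; $l_p(l_q^{M_k})$ has norm $\big(\sum_k(\sum_{i\in M_k}|a_i|^q)^{p/q}\big)^{1/p}$ (usual modification for $\infty$). Sequences are indexed by $\mathbb Z$; equality means equal sets with equivalent norms. *)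

(* Defs.v *)
From HB Require Import structures.
From mathcomp Require Import all_boot all_order all_algebra.
From mathcomp Require Import all_classical all_reals all_analysis.
Set Implicit Arguments. Unset Strict Implicit. Unset Printing Implicit Defensive.
Import Order.TTheory GRing.Theory Num.Theory.
Import numFieldNormedType.Exports.
Local Open Scope classical_set_scope.
Local Open Scope ring_scope.

Section Defs.
Variable R : realType.

Definition ndqc (phi : R -> R) : Prop :=
  [/\ (forall t, 0 < t -> 0 < phi t),
      (forall s t, 0 < s -> s <= t -> phi s <= phi t),
      (forall s t, 0 < s -> s <= t -> phi t / t <= phi s / s),
      (phi x @[x --> 0^'+] --> 0) /\ (phi x / x @[x --> +oo] --> 0)
    & (x / phi x @[x --> 0^'+] --> 0) /\ ((phi x)^-1 @[x --> +oo] --> 0)].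

Definition phi_comp (phi phi0 phi1 : R -> R) (t : R) : R :=
  phi0 t * phi (phi1 t / phi0 t).

Definition strongly_increasing (a : int -> R) : Prop :=
  (forall k, 0 < a k) /\ (forall k, 2 <= a (k + 1)%R / a k).

Definition strongly_decreasing (a : int -> R) : Prop :=
  (forall k, 0 < a k) /\ (forall k, a (k + 1)%R / a k <= 2^-1).

Definition discretizing (psi : R -> R) (s : int -> R) : Prop :=
  [/\ strongly_increasing s,
      strongly_increasing (fun k => psi (s k)),
      strongly_decreasing (fun k => psi (s k) / s k)
    & exists Z1 : set int, forall k,
        (Z1 k -> psi (s (k + 1)%R) <= 2 * psi (s k)) /\
        (~ Z1 k -> psi (s k) / s k <= 2 * (psi (s (k + 1)%R) / s (k + 1)%R))].

Local Open Scope ereal_scope.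

(* l_r norm (r in [1,oo]) of a nonnegative family f over the index set A;
   sup (with 0 for empty A) when r = +oo. *)
Definition lnorm (r : \bar R) (A : set int) (f : int -> \bar R) : \bar R :=
  match r with
  | +oo => ereal_sup ([set 0] `|` (f @` A))
  | r'%:E => (\esum_(i in A) (f i `^ r')) `^ (r'^-1)
  | -oo => 0
  end.

Definition lq_w (q : \bar R) (u : int -> R) (a : int -> R) : \bar R :=
  lnorm q setT (fun i => (`|a i * u i|)%:E).

Definition Kfun (q : \bar R) (u0 u1 : int -> R) (t : R) (x : int -> R) : \bar R :=
  ereal_inf [set y | exists x0 x1 : int -> R,
               (forall i, x i = (x0 i + x1 i)%R) /\
               y = lq_w q u0 x0 + t%:E * lq_w q u1 x1].

(* norm in (l_q(u0), l_q(u1))_{phi,p} with discretizing sequence t *)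
Definition interp_norm (p q : \bar R) (u0 u1 : int -> R) (phi : R -> R)
    (t : int -> R) (x : int -> R) : \bar R :=
  lnorm p setT (fun k => Kfun q u0 u1 (t k) x * ((phi (t k))^-1)%:E).

Definition mixed_norm (p q : \bar R) (M : int -> set int) (w : int -> R)
    (a : int -> R) : \bar R :=
  lnorm p setT (fun k => lnorm q (M k) (fun i => (`|a i * w i|)%:E)).

End Defs.

(* Main.v *)
Require Import Defs.
From HB Require Import structures.
From mathcomp Require Import all_boot all_order all_algebra.
From mathcomp Require Import all_classical all_reals all_analysis.
From mathcomp Require Import ring lra zify.
Import Order.TTheory GRing.Theory Num.Theory.
Local Open Scope classical_set_scope.
Local Open Scope ring_scope.

Ltac in0y := rewrite in_itv /= leey andbT.

Section Aux.
Variable R : realType.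
Local Open Scope ereal_scope.
Implicit Types (f g h : int -> \bar R) (A B : set int).


Lemma lnorm_ge0 (r : \bar R) A f : 0 <= lnorm r A f.
Proof.
case: r => [r| |] /=; [exact: poweR_ge0| |by []].
by apply: ereal_sup_ubound; left.
Qed.

Lemma le_lnorm (r : \bar R) A B f g : 1 <= r -> A `<=` B ->
  (forall i, A i -> 0 <= f i) -> (forall i, A i -> f i <= g i) ->
  (forall i, B i -> 0 <= g i) -> lnorm r A f <= lnorm r B g.
Proof.
case: r => [r| |] //= r1 AB f0 fg g0.
- have r0 : (0 <= r)%R by rewrite lee_fin in r1; lra.
  apply: gt0_ler_poweR; first by rewrite invr_ge0.
  + by in0y; apply: esum_ge0 => i Ai; exact: poweR_ge0.
  + by in0y; apply: esum_ge0 => i Ai; exact: poweR_ge0.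
  apply: (@le_trans _ _ (\esum_(i in A) g i `^ r)).
    apply: le_esum => i Ai; apply: gt0_ler_poweR => //; try in0y.
    - exact: f0.
    - by apply: g0; apply: AB.
    - exact: fg.
  rewrite esum_mkcond [X in _ <= X]esum_mkcond; apply: le_esum => i _.
  case: ifPn => [/[!inE] Ai|_]; first by rewrite ifT ?inE //; exact: AB.
  by case: ifP => _ //; exact: poweR_ge0.
- apply: ge_ereal_sup => x [->|[i Ai <-]].
    by apply: ereal_sup_ubound; left.
  apply: le_trans (fg i Ai) _; apply: ereal_sup_ubound; right; exists i => //.
  exact: AB.
Qed.

Lemma esumZ_le A f (c : R) : (0 <= c)%R -> (forall i, A i -> 0 <= f i) ->
  \esum_(i in A) (c%:E * f i) <= c%:E * \esum_(i in A) f i.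
Proof.
move=> c0 f0; apply: ge_ereal_sup => _ [X [finX XA] <-] /=.
have -> : (\sum_(i \in X) c%:E * f i = \sum_(i \in X) c%:E * (if i \in A then f i else 0)).
  by apply: eq_fsbigr => i /[!inE] /XA Ai; rewrite ifT // inE.
rewrite -ge0_mule_fsumr; last by move=> i; case: ifPn => // /[!inE]; exact: f0.
apply: lee_wpmul2l; first by rewrite lee_fin.
apply: ereal_sup_ubound; exists X => //; apply: eq_fsbigr => i /[!inE] /XA Ai.
by rewrite ifT // inE.
Qed.

Lemma esumMr_le A (a : int -> R) (y : \bar R) (S : R) :
  (forall i, (0 <= a i)%R) -> 0 <= y ->
  \esum_(i in A) (a i)%:E <= S%:E ->
  \esum_(i in A) ((a i)%:E * y) <= S%:E * y.
Proof.
move=> a0 y0 aS; apply: ge_ereal_sup => _ [X [finX XA] <-] /=.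
rewrite -ge0_mule_fsuml; last by move=> i; rewrite lee_fin.
apply: lee_wpmul2r => //; apply: le_trans aS.
by apply: ereal_sup_ubound; exists X.
Qed.


Lemma lnormZ_le (r : \bar R) A f (c : R) : 1 <= r -> (0 < c)%R ->
  (forall i, A i -> 0 <= f i) ->
  lnorm r A (fun i => c%:E * f i) <= c%:E * lnorm r A f.
Proof.
case: r => [r| |] //= r1 c0 f0.
- have r0 : (0 < r)%R by rewrite lee_fin in r1; lra.
  have -> : \esum_(i in A) (c%:E * f i) `^ r = \esum_(i in A) ((c `^ r)%:E * f i `^ r).
    by apply: eq_esum => i Ai; rewrite poweRM ?lee_fin ?(ltW c0) ?f0.
  apply: (@le_trans _ _ (((c `^ r)%:E * \esum_(i in A) f i `^ r) `^ r^-1)).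
    apply: gt0_ler_poweR; first by rewrite invr_ge0 ltW.
    + by in0y; apply: esum_ge0 => i Ai; apply: mule_ge0; [rewrite lee_fin powR_ge0|exact: poweR_ge0].
    + by in0y; apply: mule_ge0; [rewrite lee_fin powR_ge0|apply: esum_ge0 => i _; exact: poweR_ge0].
    by apply: esumZ_le => [|i _]; [exact: powR_ge0|exact: poweR_ge0].
  rewrite poweRM ?lee_fin ?powR_ge0 //; last by apply: esum_ge0 => i _; exact: poweR_ge0.
  by rewrite poweR_EFin -powRrM mulfV ?gt_eqF // powRr1 // ltW.
- apply: ge_ereal_sup => x [->|[i Ai <-]].
    by apply: mule_ge0; [rewrite lee_fin ltW|apply: ereal_sup_ubound; left].
  apply: lee_wpmul2l; first by rewrite lee_fin ltW.
  by apply: ereal_sup_ubound; right; exists i.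
Qed.

Lemma lnormZ (r : \bar R) A f (c : R) : 1 <= r -> (0 < c)%R ->
  (forall i, A i -> 0 <= f i) ->
  lnorm r A (fun i => c%:E * f i) = c%:E * lnorm r A f.
Proof.
move=> r1 c0 f0; apply/eqP; rewrite eq_le; apply/andP; split; first exact: lnormZ_le.
have ci : (0 < c^-1)%R by rewrite invr_gt0.
have -> : lnorm r A f = lnorm r A (fun i => c^-1%:E * (c%:E * f i)).
  congr lnorm; apply: funext => i.
  by rewrite muleA -EFinM mulVf ?gt_eqF // mul1e.
apply: (@le_trans _ _ (c%:E * (c^-1%:E * lnorm r A (fun i => c%:E * f i)))).
  apply: lee_wpmul2l; first by rewrite lee_fin ltW.
  apply: lnormZ_le => //.
  by move=> i Ai; apply: mule_ge0; [rewrite lee_fin ltW|exact: f0].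
by rewrite muleA -EFinM mulfV ?gt_eqF // mul1e.
Qed.

Lemma adde_2 (y : \bar R) : 0 <= y -> y + y = 2%:E * y.
Proof.
case: y => [y| |] // _; first by rewrite -EFinD -EFinM; congr (_%:E); ring.
by rewrite muleC gt0_mulye.
Qed.

Lemma poweRD_le (x y : \bar R) (s : R) : (0 <= s)%R -> 0 <= x -> 0 <= y ->
  (x + y) `^ s <= (2 `^ s)%:E * (x `^ s + y `^ s).
Proof.
move=> s0.
wlog xy : x y / x <= y => [H x0 y0|x0 y0].
  have [/H|/ltW/H] := leP x y; first exact.
  by rewrite addeC [X in _ * X]addeC; apply.
apply: (@le_trans _ _ ((2%:E * y) `^ s)).
  apply: gt0_ler_poweR => //; try in0y.
  - exact: adde_ge0.
  - by apply: mule_ge0.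
  - by rewrite -adde_2 // leeD2r.
rewrite poweRM // poweR_EFin; apply: lee_wpmul2l; first by rewrite lee_fin powR_ge0.
by rewrite leeDr // poweR_ge0.
Qed.

Lemma lnorm_tri (r : \bar R) A f g h : 1 <= r ->
  (forall i, A i -> 0 <= f i) -> (forall i, A i -> 0 <= g i) ->
  (forall i, A i -> 0 <= h i) -> (forall i, A i -> h i <= f i + g i) ->
  lnorm r A h <= 4%:E * (lnorm r A f + lnorm r A g).
Proof.
case: r => [r| |] //= r1 f0 g0 h0 hfg.
- have r0 : (0 < r)%R by rewrite lee_fin in r1; lra.
  have ri0 : (0 <= r^-1)%R by rewrite invr_ge0 ltW.
  set F := \esum_(i in A) f i `^ r; set G := \esum_(i in A) g i `^ r.
  have F0 : 0 <= F by apply: esum_ge0 => i _; exact: poweR_ge0.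
  have G0 : 0 <= G by apply: esum_ge0 => i _; exact: poweR_ge0.
  apply: (@le_trans _ _ (((2 `^ r)%:E * (F + G)) `^ r^-1)).
    apply: gt0_ler_poweR => //; try in0y.
    - by apply: esum_ge0 => i _; exact: poweR_ge0.
    - by apply: mule_ge0; [rewrite lee_fin powR_ge0|exact: adde_ge0].
    rewrite /F /G -esumD; last 2 first.
    + by move=> i _; exact: poweR_ge0.
    + by move=> i _; exact: poweR_ge0.
    apply: (@le_trans _ _ (\esum_(i in A) ((2 `^ r)%:E * (f i `^ r + g i `^ r)))); last first.
      apply: esumZ_le; first exact: powR_ge0.
      by move=> i _; apply: adde_ge0; exact: poweR_ge0.
    apply: le_esum => i Ai.
    apply: (@le_trans _ _ ((f i + g i) `^ r)); last first.
      by apply: poweRD_le; [exact: ltW|exact: f0|exact: g0].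
    apply: gt0_ler_poweR; try in0y; try exact: ltW.
    + exact: h0.
    + by apply: adde_ge0; [exact: f0|exact: g0].
    + exact: hfg.
  rewrite poweRM ?lee_fin ?powR_ge0 //; last exact: adde_ge0.
  rewrite poweR_EFin -powRrM mulfV ?gt_eqF // powRr1 //.
  apply: (@le_trans _ _ (2%:E * ((2 `^ r^-1)%:E * (F `^ r^-1 + G `^ r^-1)))).
    apply: lee_wpmul2l => //; exact: poweRD_le.
  rewrite muleA -EFinM; apply: lee_wpmul2r.
    by apply: adde_ge0; exact: poweR_ge0.
  rewrite lee_fin; have : (2 `^ r^-1 <= 2)%R.
    apply: ler1_powR; first by rewrite ler1n.
    by rewrite invf_le1 //; rewrite lee_fin in r1.
  lra.
- apply: ge_ereal_sup => x [->|[i Ai <-]].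
    apply: mule_ge0 => //; apply: adde_ge0; exact: lnorm_ge0 (+oo) _ _.
  apply: le_trans (hfg i Ai) _.
  apply: le_trans (lee_pemull _ _); last 2 first.
  + by apply: adde_ge0; apply: ereal_sup_ubound; left.
  + by rewrite lee_fin; lra.
  by apply: leeD; apply: ereal_sup_ubound; right; exists i.
Qed.

End Aux.

Section Geo.
Variable R : realType.
Local Open Scope ereal_scope.

Lemma geo (s : R) : (0 < s)%R -> (s < 1)%R ->
  \sum_(n <oo) (s ^+ n)%:E <= ((1 - s)^-1)%:E.
Proof.
move=> s0 s1.
apply: lime_le.
  by apply: is_cvg_nneseries => n _; rewrite lee_fin exprn_ge0 // ltW.
apply: nearW => n; rewrite sumEFin lee_fin.
have := @geometric_le_lim R n 1 s ler01 s0.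
rewrite ger0_norm; last exact: ltW.
move=> /(_ s1); rewrite mul1r.
move=> H; apply: le_trans H; rewrite le_eqVlt; apply/orP; left; apply/eqP.
by rewrite /series /=; apply: eq_bigr => i _; rewrite /geometric /= mul1r.
Qed.

Lemma geo_int (s : R) (k : int) : (0 < s)%R -> (s < 1)%R ->
  \esum_(j in [set: int]) (s ^+ `|k - j|%N)%:E <= (2 * (1 - s)^-1)%:E.
Proof.
move=> s0 s1.
have g0 : forall j : int, 0 <= (s ^+ `|k - j|%N)%:E.
  by move=> j; rewrite lee_fin exprn_ge0 // ltW.
rewrite (@esumID R int [set j | (k <= j)%R] [set: int]); last by move=> j _.
rewrite !setTI.
have -> : (2 * (1 - s)^-1 = (1 - s)^-1 + (1 - s)^-1)%R by ring.
rewrite EFinD; apply: leeD.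
- rewrite (_ : esum _ _ = \esum_(j in [set (k + n%:Z)%R | n in [set: nat]]) (s ^+ `|k - j|%N)%:E); last first.
    congr esum; apply/seteqP; split => j /=.
    + move=> kj; exists `|j - k|%N => //; rewrite gez0_abs ?subr_ge0 //.
      by rewrite addrCA subrr addr0.
    + by case => n _ <-; rewrite lerDl.
  rewrite esum_image; last by move=> n m _ _ /addrI /eqP; rewrite eqz_nat => /eqP.
  apply: (@le_trans _ _ (\sum_(n <oo) (s ^+ n)%:E)); last exact: geo.
  rewrite nneseries_esumT; last first.
    by move=> n; rewrite lee_fin exprn_ge0 // ltW.
  apply: le_esum => n _; rewrite opprD addrA subrr add0r abszN absz_nat //.
- rewrite (_ : esum _ _ = \esum_(j in [set (k - n.+1%:Z)%R | n in [set: nat]]) (s ^+ `|k - j|%N)%:E); last first.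
    congr esum; apply/seteqP; split => j /=.
    + move=> /negP; rewrite -ltNge => jk.
      exists `|(k - j - 1)%R|%N => //.
      rewrite -addn1 PoszD gez0_abs; first by ring.
      by lia.
    + case => n _ <-; apply/negP; rewrite -ltNge.
      lia.
  rewrite esum_image; last by move=> n m _ _ /addrI /oppr_inj /eqP; rewrite eqz_nat => /eqP [].
  apply: (@le_trans _ _ (\sum_(n <oo) (s ^+ n)%:E)); last exact: geo.
  rewrite nneseries_esumT; last first.
    by move=> n; rewrite lee_fin exprn_ge0 // ltW.
  apply: le_esum => n _; rewrite opprB addrC subrK absz_nat lee_fin.
  by rewrite exprS ler_piMl ?exprn_ge0 ?ltW.
Qed.

End Geo.

Section Sup.
Variable R : realType.
Local Open Scope ereal_scope.
Implicit Types (f g h : int -> \bar R) (A B : set int).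

Lemma esum_ge1 A (a : int -> \bar R) j : (forall i, A i -> 0 <= a i) -> A j ->
  a j <= \esum_(i in A) a i.
Proof.
move=> a0 Aj; apply: esum_ge; exists [set j].
  by split; [exact: finite_set1|move=> x ->].
by rewrite fsbig_set1.
Qed.

Lemma poweRK (x : \bar R) (r : R) : r != 0%R -> 0 <= x -> (x `^ r) `^ r^-1 = x.
Proof. by move=> r0 x0; rewrite -poweRrM mulfV // poweRe1. Qed.

Lemma poweRKV (x : \bar R) (r : R) : r != 0%R -> 0 <= x -> (x `^ r^-1) `^ r = x.
Proof. by move=> r0 x0; rewrite -poweRrM mulVf // poweRe1. Qed.

Lemma sup_pow_le (z : int -> \bar R) (r : R) : (0 < r)%R -> (forall j, 0 <= z j) ->
  (ereal_sup (range z)) `^ r <= \esum_(j in [set: int]) (z j) `^ r.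
Proof.
move=> r0 z0.
have rn0 : r != 0%R by rewrite gt_eqF.
have E0 : 0 <= \esum_(j in [set: int]) (z j) `^ r.
  by apply: esum_ge0 => j _; exact: poweR_ge0.
rewrite -[X in _ <= X](poweRKV _ _ rn0) //.
apply: gt0_ler_poweR; [exact: ltW| | |].
- by in0y; apply: le_trans (z0 0%R) _; apply: ereal_sup_ubound; exists 0%R.
- by in0y; exact: poweR_ge0.
apply: ge_ereal_sup => _ [j _ <-].
rewrite -[X in X <= _](poweRK _ _ rn0) //.
apply: gt0_ler_poweR; [by rewrite invr_ge0 ltW| | |].
- by in0y; exact: poweR_ge0.
- by in0y.
by apply: esum_ge1 => // i _; exact: poweR_ge0.
Qed.

Lemma esum_swap (F : int -> int -> \bar R) : (forall i j, 0 <= F i j) ->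
  \esum_(i in [set: int]) \esum_(j in [set: int]) F i j =
  \esum_(j in [set: int]) \esum_(i in [set: int]) F i j.
Proof.
move=> F0; rewrite !esum_esum //.
rewrite (reindex_esum ([set: int] `*`` (fun=> [set: int])) _ (fun x => (x.2, x.1))) //.
split=> //=.
- by move=> [i1 i2] [j1 j2] /= _ _ [] -> ->.
- by move=> [i1 i2] _ /=; exists (i2, i1).
Qed.

Variable s : R.
Hypothesis s0 : (0 < s)%R.
Hypothesis s1 : (s < 1)%R.

Definition supw (k : int) (Y : int -> \bar R) :=
  ereal_sup (range (fun j => (s ^+ `|k - j|%N)%:E * Y j)).

Lemma spow_ge0 n : (0 <= s ^+ n)%R.
Proof. by rewrite exprn_ge0 // ltW. Qed.

Lemma spow_le1 n : (s ^+ n <= 1)%R.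
Proof. by rewrite exprn_ile1 // ltW. Qed.

Lemma supw_ge0 k Y : (forall j, 0 <= Y j) -> 0 <= supw k Y.
Proof.
move=> Y0; apply: le_trans (ereal_sup_ubound _); last by exists k.
by apply: mule_ge0 => //; rewrite lee_fin spow_ge0.
Qed.

Lemma supw_ub k Y j : (s ^+ `|k - j|%N)%:E * Y j <= supw k Y.
Proof. by apply: ereal_sup_ubound; exists j. Qed.

Lemma geo_int' (j : int) :
  \esum_(k in [set: int]) (s ^+ `|k - j|%N)%:E <= (2 * (1 - s)^-1)%:E.
Proof.
apply: (@le_trans _ _ (\esum_(k in [set: int]) (s ^+ `|j - k|%N)%:E)); last exact: geo_int.
rewrite le_eqVlt; apply/orP; left; apply/eqP; apply: eq_esum => k _.
by rewrite -abszN opprB.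
Qed.


Lemma spow_powR_le n (p : R) : (1 <= p)%R -> ((s ^+ n) `^ p <= s ^+ n)%R.
Proof. by move=> p1; apply: ge1r_powR => //; rewrite exprn_gt0 // spow_le1. Qed.

Lemma lemP (p : \bar R) : 1 <= p -> exists C : R, (0 < C)%R /\
  forall X Y : int -> \bar R, (forall k, 0 <= X k) -> (forall j, 0 <= Y j) ->
  (forall k, X k <= supw k Y) -> lnorm p setT X <= C%:E * lnorm p setT Y.
Proof.
case: p => [p| |] // p1.
- have p1' : (1 <= p)%R by rewrite lee_fin in p1.
  have p0 : (0 < p)%R by lra.
  have pn0 : p != 0%R by rewrite gt_eqF.
  set S := (2 * (1 - s)^-1)%R.
  have S0 : (0 < S)%R by rewrite /S divr_gt0 // subr_gt0.
  exists (S `^ p^-1)%R; split; first exact: powR_gt0.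
  move=> X Y X0 Y0 XY /=.
  have key : \esum_(k in [set: int]) X k `^ p <= S%:E * \esum_(j in [set: int]) Y j `^ p.
    apply: (@le_trans _ _ (\esum_(k in [set: int]) \esum_(j in [set: int])
        ((s ^+ `|k - j|%N)%:E * Y j `^ p))).
      apply: le_esum => k _.
      apply: (@le_trans _ _ ((supw k Y) `^ p)).
        apply: gt0_ler_poweR; [exact: ltW| | |exact: XY].
        + by in0y; exact: X0.
        + by in0y; exact: supw_ge0.
      apply: (@le_trans _ _ (\esum_(j in [set: int]) ((s ^+ `|k - j|%N)%:E * Y j) `^ p)).
        by apply: sup_pow_le => // j; apply: mule_ge0 => //; rewrite lee_fin spow_ge0.
      apply: le_esum => j _; rewrite poweRM ?lee_fin ?spow_ge0 // poweR_EFin.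
      apply: lee_wpmul2r; first exact: poweR_ge0.
      by rewrite lee_fin spow_powR_le.
    rewrite esum_swap; last first.
      by move=> i j; apply: mule_ge0; [rewrite lee_fin spow_ge0|exact: poweR_ge0].
    apply: (@le_trans _ _ (\esum_(j in [set: int]) (S%:E * Y j `^ p))).
      apply: le_esum => j _; apply: esumMr_le => //.
      - by move=> i; exact: spow_ge0.
      - exact: poweR_ge0.
      - exact: geo_int'.
    by apply: esumZ_le; [exact: ltW|move=> j _; exact: poweR_ge0].
  apply: (@le_trans _ _ ((S%:E * \esum_(j in [set: int]) Y j `^ p) `^ p^-1)).
    apply: gt0_ler_poweR => //; first by rewrite invr_ge0 ltW.
    + by in0y; apply: esum_ge0 => k _; exact: poweR_ge0.
    + in0y; apply: mule_ge0; first by rewrite lee_fin ltW.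
      by apply: esum_ge0 => k _; exact: poweR_ge0.
  rewrite poweRM; [by rewrite poweR_EFin|by rewrite lee_fin ltW|].
  by apply: esum_ge0 => k _; exact: poweR_ge0.
- exists 1%R; split => // X Y X0 Y0 XY /=; rewrite mul1e.
  apply: ge_ereal_sup => x [->|[k _ <-]]; first by apply: ereal_sup_ubound; left.
  apply: le_trans (XY k) _; apply: ge_ereal_sup => _ [j _ <-].
  apply: (@le_trans _ _ (Y j)); last by apply: ereal_sup_ubound; right; exists j.
  by rewrite -[X in _ <= X]mul1e; apply: lee_wpmul2r => //; rewrite lee_fin spow_le1.
Qed.

Lemma lemQ (q : \bar R) : 1 <= q -> exists C : R, (0 < C)%R /\
  forall k h g (M : int -> set int), (forall i, 0 <= h i) -> (forall i, 0 <= g i) ->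
  (forall i, exists j, M j i) ->
  (forall j i, M j i -> h i <= (s ^+ `|k - j|%N * s ^+ `|k - j|%N)%:E * g i) ->
  lnorm q setT h <= C%:E * supw k (fun j => lnorm q (M j) g).
Proof.
case: q => [q| |] // q1.
- have q1' : (1 <= q)%R by rewrite lee_fin in q1.
  have q0 : (0 < q)%R by lra.
  have qn0 : q != 0%R by rewrite gt_eqF.
  set S := (2 * (1 - s)^-1)%R.
  have S0 : (0 < S)%R by rewrite /S divr_gt0 // subr_gt0.
  exists (S `^ q^-1)%R; split; first exact: powR_gt0.
  move=> k h g M h0 g0 cov hg.
  set W := supw k _.
  have W0 : 0 <= W by apply: supw_ge0 => j; exact: lnorm_ge0.
  have key : \esum_(i in [set: int]) h i `^ q <= S%:E * W `^ q.
    apply: (@le_trans _ _ (\esum_(i in [set: int]) \esum_(j in [set: int])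
      (if i \in M j then ((s ^+ `|k - j|%N * s ^+ `|k - j|%N) `^ q)%:E * g i `^ q else 0))).
      apply: le_esum => i _; case: (cov i) => j Mji.
      apply: (@le_trans _ _ (if i \in M j then ((s ^+ `|k - j|%N * s ^+ `|k - j|%N) `^ q)%:E
                 * g i `^ q else 0)); last first.
        apply: (@esum_ge1 [set: int] (fun j => if i \in M j then ((s ^+ `|k - j|%N * s ^+ `|k - j|%N) `^ q)%:E
                 * g i `^ q else 0)) => // j' _.
        by case: ifP => _ //; apply: mule_ge0; [rewrite lee_fin powR_ge0|exact: poweR_ge0].
      rewrite ifT ?inE // -poweR_EFin -poweRM ?lee_fin ?mulr_ge0 ?spow_ge0 //.
      apply: gt0_ler_poweR; [exact: ltW| | |exact: hg].
      + by in0y.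
      + by in0y; apply: mule_ge0 => //; rewrite lee_fin mulr_ge0 ?spow_ge0.
    rewrite esum_swap; last first.
      move=> i j; case: ifP => _ //.
      by apply: mule_ge0; [rewrite lee_fin powR_ge0|exact: poweR_ge0].
    apply: (@le_trans _ _ (\esum_(j in [set: int]) ((s ^+ `|k - j|%N)%:E * W `^ q))); last first.
      apply: esumMr_le => //; [by move=> j; exact: spow_ge0|exact: poweR_ge0|exact: geo_int].
    apply: le_esum => j _; rewrite -esum_mkcond.
    set E := \esum_(i in M j) g i `^ q.
    have E0 : 0 <= E by apply: esum_ge0 => i _; exact: poweR_ge0.
    apply: (@le_trans _ _ (((s ^+ `|k - j|%N * s ^+ `|k - j|%N) `^ q)%:E * E)).
      by apply: esumZ_le; [exact: powR_ge0|move=> i _; exact: poweR_ge0].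
    rewrite -(poweRKV _ _ qn0 E0) powRM ?spow_ge0 // EFinM -muleA.
    rewrite -poweR_EFin -poweRM ?lee_fin ?spow_ge0 //; last exact: poweR_ge0.
    apply: lee_pmul.
    + by rewrite lee_fin powR_ge0.
    + exact: poweR_ge0.
    + by rewrite lee_fin spow_powR_le.
    apply: gt0_ler_poweR; [exact: ltW| | |].
    + by in0y; apply: mule_ge0; [rewrite lee_fin spow_ge0|exact: poweR_ge0].
    + by in0y.
    exact: (@supw_ub k (fun j => (\esum_(i in M j) g i `^ q) `^ q^-1) j).
  apply: (@le_trans _ _ ((S%:E * W `^ q) `^ q^-1)).
    apply: gt0_ler_poweR => //; first by rewrite invr_ge0 ltW.
    + by in0y; apply: esum_ge0 => i _; exact: poweR_ge0.
    + by in0y; apply: mule_ge0; [rewrite lee_fin ltW|exact: poweR_ge0].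
  rewrite poweRM; [|by rewrite lee_fin ltW|exact: poweR_ge0].
  by rewrite poweRK // poweR_EFin.
- exists 1%R; split => // k h g M h0 g0 cov hg /=; rewrite mul1e.
  apply: ge_ereal_sup => x [->|[i _ <-]].
    by apply: supw_ge0 => j; exact: (@lnorm_ge0 _ +oo).
  case: (cov i) => j Mji.
  apply: le_trans (hg j i Mji) _.
  apply: le_trans (supw_ub k _ j).
  rewrite EFinM -muleA; apply: lee_wpmul2l; first by rewrite lee_fin spow_ge0.
  apply: (@le_trans _ _ (g i)).
    by rewrite -[X in _ <= X]mul1e; apply: lee_wpmul2r => //; rewrite lee_fin spow_le1.
  by apply: ereal_sup_ubound; right; exists i.
Qed.


Lemma supwZ k Y (c : R) : (0 < c)%R -> c%:E * supw k Y <= supw k (fun j => c%:E * Y j).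
Proof.
move=> c0; rewrite /supw -ereal_sup_pZl //; apply: ereal_sup_le => _ [_ [j _ <-] <-].
by exists j => //; rewrite muleCA.
Qed.

End Sup.

Section Kfun.
Variable R : realType.
Local Open Scope ereal_scope.

Variables (q : \bar R) (u0 u1 : int -> R) (tau : R) (a : int -> R).
Hypothesis q1 : 1 <= q.
Hypothesis u00 : forall i, (0 < u0 i)%R.
Hypothesis u10 : forall i, (0 < u1 i)%R.
Hypothesis tau0 : (0 < tau)%R.

Let m i := Num.min (u0 i) (tau * u1 i)%R.

Let m0 i : (0 <= m i)%R.
Proof. by rewrite le_min !ltW ?mulr_gt0. Qed.

Lemma K1 : Kfun q u0 u1 tau a <= 2%:E * lnorm q setT (fun i => (`|a i| * m i)%:E).
Proof.
set x0 := fun i => if (u0 i <= tau * u1 i)%R then a i else 0%R.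
set x1 := fun i => if (u0 i <= tau * u1 i)%R then 0%R else a i.
set L := lnorm q setT _.
have L0 : 0 <= L by exact: lnorm_ge0.
apply: (@le_trans _ _ (lq_w q u0 x0 + tau%:E * lq_w q u1 x1)).
  apply: ereal_inf_lbound; exists x0, x1; split => // i.
  by rewrite /x0 /x1; case: ifP => _; rewrite ?addr0 ?add0r.
rewrite -adde_2 //; apply: leeD.
- apply: le_lnorm => // i _; rewrite ?lee_fin //.
  + rewrite /x0; case: ifP => c; last by rewrite mul0r normr0; apply: mulr_ge0 => //; exact: m0.
    by rewrite /m min_l // normrM (gtr0_norm (u00 i)).
  + by apply: mulr_ge0 => //; exact: m0.
- rewrite /lq_w -lnormZ //; apply: le_lnorm => // i _.
  + by rewrite -EFinM lee_fin mulr_ge0 // ltW.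
  + rewrite -EFinM lee_fin /x1; case: ifP => c.
      by rewrite mul0r normr0 mulr0; apply: mulr_ge0 => //; exact: m0.
    rewrite /m min_r; last by rewrite ltW // ltNge c.
    by rewrite normrM (gtr0_norm (u10 i)); lra.
  + by rewrite lee_fin; apply: mulr_ge0 => //; exact: m0.
Qed.

Lemma K2 : lnorm q setT (fun i => (`|a i| * m i)%:E) <= 4%:E * Kfun q u0 u1 tau a.
Proof.
set L := lnorm q setT _.
have -> : L = 4%:E * (4^-1%:E * L).
  by rewrite muleA -EFinM mulfV ?mul1e.
apply: lee_wpmul2l => //; apply/ereal_infP => _ [x0 [x1 [ax ->]]].
set y := (lq_w q u0 x0 + _).
suff H : L <= 4%:E * y.
  apply: (@le_trans _ _ (4^-1%:E * (4%:E * y))); first by apply: lee_wpmul2l.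
  by rewrite muleA -EFinM mulVf // mul1e.
apply: (@le_trans _ _ (4%:E * (lnorm q setT (fun i => (`|x0 i| * m i)%:E) +
   lnorm q setT (fun i => (`|x1 i| * m i)%:E)))).
  apply: lnorm_tri => //.
  - by move=> i _; rewrite lee_fin; apply: mulr_ge0 => //; exact: m0.
  - by move=> i _; rewrite lee_fin; apply: mulr_ge0 => //; exact: m0.
  - by move=> i _; rewrite lee_fin; apply: mulr_ge0 => //; exact: m0.
  - move=> i _; rewrite -EFinD lee_fin -mulrDl ax.
    by apply: ler_wpM2r; [exact: m0|exact: ler_normD].
apply: lee_wpmul2l => //; apply: leeD.
- apply: le_lnorm => // i _; rewrite ?lee_fin.
  + by apply: mulr_ge0 => //; exact: m0.
  + by rewrite normrM (gtr0_norm (u00 i)); apply: ler_wpM2l => //; rewrite ge_min lexx.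
- rewrite /lq_w -lnormZ //; apply: le_lnorm => // i _.
  + by rewrite lee_fin; apply: mulr_ge0 => //; exact: m0.
  + rewrite -EFinM lee_fin normrM (gtr0_norm (u10 i)) (mulrC tau) -mulrA.
    by apply: ler_wpM2l => //; rewrite ge_min (mulrC (u1 i)) lexx orbT.
  + by rewrite -EFinM lee_fin mulr_ge0 // ltW.
Qed.

End Kfun.

Section Real.
Variable R : realType.
Local Open Scope ring_scope.

Lemma le_by (x y n d : R) : 0 < d -> y - x = n / d -> 0 <= n -> x <= y.
Proof.
by move=> d0 E n0; rewrite -subr_ge0 E divr_ge0 // ltW.
Qed.

Lemma le_from (x y n d : R) : 0 < d -> y - x = n / d -> x <= y -> 0 <= n.
Proof.
move=> d0 E; rewrite -subr_ge0 E => H.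
have di : 0 < d^-1 by rewrite invr_gt0.
by rewrite -(pmulr_lge0 _ di).
Qed.

Lemma LD (f0 f1 T P Q c : R) : 0 < f0 -> 0 < f1 -> 0 < T -> 0 < P -> 0 < Q ->
  0 <= c -> (Q / (f1 / f0) <= c * (P / T) \/ Q <= 2 * c * P) ->
  Num.min f0^-1 (T * f1^-1) * P^-1 <= 2 * c * (f0 * Q)^-1.
Proof.
move=> f00 f10 T0 P0 Q0 c0 [H|H].
- have H' := le_from _ _ (c * P * f1 - Q * f0 * T) (T * f1) (mulr_gt0 T0 f10) _ H.
  have {H'} H' : 0 <= c * P * f1 - Q * f0 * T.
    by apply: H'; field; rewrite ?gt_eqF.
  apply: le_trans (_ : T * f1^-1 * P^-1 <= _).
    by apply: ler_wpM2r; [rewrite invr_ge0 ltW|rewrite ge_min lexx orbT].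
  apply: (le_by _ _ (2 * (c * P * f1) - Q * f0 * T) (f0 * Q * f1 * P)).
  + by rewrite !mulr_gt0.
  + by field; rewrite ?gt_eqF.
  + have : 0 <= c * P * f1 by rewrite !mulr_ge0 // ltW.
    lra.
- apply: le_trans (_ : f0^-1 * P^-1 <= _).
    by apply: ler_wpM2r; [rewrite invr_ge0 ltW|rewrite ge_min lexx].
  apply: (le_by _ _ (2 * c * P - Q) (f0 * Q * P)).
  + by rewrite !mulr_gt0.
  + by field; rewrite ?gt_eqF.
  + lra.
Qed.

Lemma LC (f0 f1 T P Q : R) : 0 < f0 -> 0 < f1 -> 0 < T -> 0 < P -> 0 < Q ->
  ((f1 / f0 <= T /\ P <= 2 * Q) \/ (T <= f1 / f0 /\ P / T <= 2 * (Q / (f1 / f0)))) ->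
  (f0 * Q)^-1 <= 2 * (Num.min f0^-1 (T * f1^-1) * P^-1).
Proof.
move=> f00 f10 T0 P0 Q0 [[H1 H2]|[H1 H2]].
- have H1' : 0 <= T * f0 - f1.
    by apply: (le_from _ _ _ f0 f00 _ H1); field; rewrite gt_eqF.
  have m : f0^-1 <= T * f1^-1.
    apply: (le_by _ _ (T * f0 - f1) (f0 * f1)) => //; first by rewrite mulr_gt0.
    by field; rewrite ?gt_eqF.
  rewrite min_l //.
  apply: (le_by _ _ (2 * Q - P) (f0 * Q * P)).
  + by rewrite !mulr_gt0.
  + by field; rewrite ?gt_eqF.
  + lra.
- have H1' : 0 <= f1 - T * f0.
    by apply: (le_from _ _ _ f0 f00 _ H1); field; rewrite gt_eqF.
  have m : T * f1^-1 <= f0^-1.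
    apply: (le_by _ _ (f1 - T * f0) (f0 * f1)) => //; first by rewrite mulr_gt0.
    by field; rewrite ?gt_eqF.
  have H2' : 0 <= 2 * (Q * f0 * T) - P * f1.
    by apply: (le_from _ _ _ (T * f1) (mulr_gt0 T0 f10) _ H2); field; rewrite ?gt_eqF.
  rewrite min_r //.
  apply: (le_by _ _ (2 * (Q * f0 * T) - P * f1) (f0 * Q * f1 * P)) => //.
  + by rewrite !mulr_gt0.
  + by field; rewrite ?gt_eqF.
Qed.


Lemma si_chain (a : int -> R) : strongly_increasing a ->
  forall k (n : nat), 2 ^+ n * a k <= a (k + n%:Z).
Proof.
move=> [a0 a2] k; elim=> [|n IH]; first by rewrite expr0 mul1r addr0.
have := a2 (k + n%:Z); rewrite ler_pdivlMr // => H.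
have -> : (k + n.+1%:Z = k + n%:Z + 1)%R by rewrite -addn1 PoszD addrA.
rewrite exprS -mulrA.
lra.
Qed.

Lemma sd_chain (b : int -> R) : strongly_decreasing b ->
  forall k (n : nat), b (k + n%:Z) <= 2^-1 ^+ n * b k.
Proof.
move=> [b0 b2] k; elim=> [|n IH]; first by rewrite expr0 mul1r addr0.
have := b2 (k + n%:Z); rewrite ler_pdivrMr // => H.
have -> : (k + n.+1%:Z = k + n%:Z + 1)%R by rewrite -addn1 PoszD addrA.
rewrite exprS -mulrA.
lra.
Qed.

Lemma nat_search (P : nat -> bool) N : P 0%N -> ~~ P N -> exists m, P m /\ ~~ P m.+1.
Proof.
elim: N => [|N IH] P0 PN; first by rewrite P0 in PN.
case PN' : (P N); first by exists N.
by apply: IH => //; rewrite PN'.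
Qed.

Lemma pow_big (y : R) : exists n : nat, y < 2 ^+ n.
Proof.
exists (Num.Def.archi_bound `|y|).
apply: le_lt_trans (ler_norm y) _.
apply: lt_trans (archi_boundP (normr_ge0 y)) _.
rewrite -natrX ltr_nat; exact: ltn_expl.
Qed.

Lemma tcover (t : int -> R) : strongly_increasing t ->
  forall x, 0 < x -> exists j, t j <= x <= t (j + 1).
Proof.
move=> Ht x x0; have [t0 _] := Ht.
have [n0 Hn0] := pow_big (t 0 / x).
have [N HN] := pow_big (x / t 0).
have p0 : 0 < 2 ^+ n0 :> R by rewrite exprn_gt0.
set P := fun m : nat => t (- n0%:Z + m%:Z) <= x.
have P0 : P 0%N.
  rewrite /P addr0.
  have := si_chain _ Ht (- n0%:Z) n0; rewrite addNr => H.
  move: Hn0; rewrite ltr_pdivrMr // => H2.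
  have : 2 ^+ n0 * t (- n0%:Z) < 2 ^+ n0 * x by lra.
  by rewrite ltr_pM2l // => /ltW.
have PN : ~~ P (n0 + N)%N.
  rewrite /P PoszD addrA addNr add0r -ltNge.
  have := si_chain _ Ht 0 N; rewrite add0r => H.
  move: HN; rewrite ltr_pdivrMr // => H2.
  lra.
have [m [Pm Pm1]] := nat_search _ _ P0 PN.
exists (- n0%:Z + m%:Z); apply/andP; split; first exact: Pm.
move: Pm1; rewrite /P -ltNge -[m.+1]addn1 PoszD addrA.
exact: ltW.
Qed.

End Real.

Lemma Kfun_ge0 (R : realType) (q : \bar R) u0 u1 tau (a : int -> R) :
  (0 <= tau)%R -> (0 <= Kfun q u0 u1 tau a)%E.
Proof.
move=> tau0; apply/ereal_infP => _ [x0 [x1 [_ ->]]].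
by apply: adde_ge0; [exact: lnorm_ge0|apply: mule_ge0; [rewrite lee_fin|exact: lnorm_ge0]].
Qed.

Theorem corollary3p4 (R : realType) (p q : \bar R)
  (phi0 phi1 phi : R -> R) (tt t : int -> R) :
  (1 <= p)%E -> (1 <= q)%E ->
  ndqc phi0 -> ndqc phi1 -> ndqc phi ->
  discretizing (phi_comp phi phi0 phi1) tt ->
  discretizing phi t ->
  let u0 := fun i => (phi0 (tt i))^-1 in
  let u1 := fun i => (phi1 (tt i))^-1 in
  let w := fun i => (phi_comp phi phi0 phi1 (tt i))^-1 in
  let M := fun k => [set i | t k <= phi1 (tt i) / phi0 (tt i) <= t (k + 1)] in
  exists C : R, 0 < C /\
    forall a : int -> R,
      (interp_norm p q u0 u1 phi t a <= C%:E * mixed_norm p q M w a)%E /\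
      (mixed_norm p q M w a <= C%:E * interp_norm p q u0 u1 phi t a)%E.
Proof.
move=> p1 q1 [ph00 _ _ _ _] [ph10 _ _ _ _] [ph0 phmono phratio _ _]
  [[tt0 _] _ _ _] [[t0 t2] Hphit Hphitd [Z1 HZ]] u0 u1 w M.
have f00 : forall i, 0 < phi0 (tt i) by move=> i; exact: ph00.
have f10 : forall i, 0 < phi1 (tt i) by move=> i; exact: ph10.
have u00 : forall i, 0 < u0 i by move=> i; rewrite /u0 invr_gt0.
have u10 : forall i, 0 < u1 i by move=> i; rewrite /u1 invr_gt0.
have x0 : forall i, 0 < phi1 (tt i) / phi0 (tt i) by move=> i; rewrite divr_gt0.
have Q0 : forall i, 0 < phi (phi1 (tt i) / phi0 (tt i)) by move=> i; exact: ph0.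
have P0 : forall k, 0 < phi (t k) by move=> k; exact: ph0.
have Ht : strongly_increasing t by [].
have wE : forall i, w i = (phi0 (tt i) * phi (phi1 (tt i) / phi0 (tt i)))^-1 by [].
have w0 : forall i, 0 < w i by move=> i; rewrite wE invr_gt0 mulr_gt0.
set sg := Num.sqrt (2^-1 : R).
have sg0 : 0 < sg by rewrite sqrtr_gt0 invr_gt0.
have sg1 : sg < 1 by rewrite -sqrtr1 ltr_sqrt // invf_lt1 // ltr1n.
have sgsg : forall n, sg ^+ n * sg ^+ n = 2^-1 ^+ n.
  by move=> n; rewrite -exprMn -expr2 sqr_sqrtr // invr_ge0.
have [CP [CP0 HP]] := @lemP R sg sg0 sg1 p p1.
have [CQ [CQ0 HQ]] := @lemQ R sg sg0 sg1 q q1.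
exists (CP * 4 * CQ + CP * (8 / sg)); split.
  by apply: addr_gt0; apply: mulr_gt0 => //; [apply: mulr_gt0|apply: divr_gt0].
move=> a.
set N := fun k => (Kfun q u0 u1 (t k) a * ((phi (t k))^-1)%:E)%E.
set B := fun k => lnorm q (M k) (fun i => (`|a i * w i|)%:E).
have -> : interp_norm p q u0 u1 phi t a = lnorm p setT N by [].
have -> : mixed_norm p q M w a = lnorm p setT B by [].
have N0 : forall k, (0 <= N k)%E.
  move=> k; apply: mule_ge0; first by apply: Kfun_ge0; exact: ltW.
  by rewrite lee_fin invr_ge0 ltW.
have B0 : forall k, (0 <= B k)%E by move=> k; exact: lnorm_ge0.
have IN0 : (0 <= lnorm p setT N)%E by exact: lnorm_ge0.
have MB0 : (0 <= lnorm p setT B)%E by exact: lnorm_ge0.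
set mk := fun k i => Num.min (u0 i) (t k * u1 i).
have mk0 : forall k i, 0 <= mk k i.
  by move=> k i; rewrite /mk le_min !ltW ?mulr_gt0.
have EZ : forall (c : R) (g : int -> R),
    (fun i => (c * g i)%:E) = (fun i => c%:E * (g i)%:E)%E.
  by move=> c g; apply: funext => i; rewrite EFinM.
have KG1 : forall k, (N k <= 2%:E * lnorm q setT
    (fun i => ((phi (t k))^-1 * (`|a i| * mk k i))%:E))%E.
  move=> k; rewrite EZ lnormZ //; last 2 first.
    - by rewrite invr_gt0.
    - by move=> i _; rewrite lee_fin mulr_ge0.
  rewrite /N muleC muleA [X in (_ <= X * _)%E]muleC -muleA.
  apply: lee_wpmul2l; first by rewrite lee_fin invr_ge0 ltW.
  exact: (@K1 R q u0 u1 (t k) a q1 u00 u10 (t0 k)).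
have KG2 : forall k, (lnorm q setT
    (fun i => ((phi (t k))^-1 * (`|a i| * mk k i))%:E) <= 4%:E * N k)%E.
  move=> k; rewrite EZ lnormZ //; last 2 first.
    - by rewrite invr_gt0.
    - by move=> i _; rewrite lee_fin mulr_ge0.
  rewrite /N (muleC (Kfun _ _ _ _ _)) muleCA.
  apply: lee_wpmul2l; first by rewrite lee_fin invr_ge0 ltW.
  exact: (@K2 R q u0 u1 (t k) a q1 u00 u10 (t0 k)).
have cov : forall i, exists j, M j i.
  by move=> i; have [j Hj] := @tcover R t Ht _ (x0 i); exists j.
have D1 : (lnorm p setT N <= (CP * (4 * CQ))%:E * lnorm p setT B)%E.
  rewrite EFinM -muleA.
  have -> : ((4 * CQ)%:E * lnorm p setT B)%E = lnorm p setT (fun j => (4 * CQ)%:E * B j)%E.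
    by rewrite lnormZ // mulr_gt0.
  apply: HP => //.
    by move=> j; apply: mule_ge0 => //; rewrite lee_fin mulr_ge0 // ltW.
  move=> k; apply: le_trans (KG1 k) _.
  set h := fun i => (2^-1 * ((phi (t k))^-1 * (`|a i| * mk k i)))%:E.
  have h0 : forall i, (0 <= h i)%E.
    by move=> i; rewrite lee_fin !mulr_ge0 // invr_ge0 ltW.
  have -> : lnorm q setT (fun i => ((phi (t k))^-1 * (`|a i| * mk k i))%:E) =
      (2%:E * lnorm q setT h)%E.
    rewrite -lnormZ //.
    by congr lnorm; apply: funext => i; rewrite /h -EFinM; congr (_%:E); rewrite [RHS]mulrA mulfV ?mul1r.
  have HQk : (lnorm q setT h <= CQ%:E * @supw R sg k B)%E.
    apply: (HQ k h (fun i => (`|a i * w i|)%:E) M) => //.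
    move=> j i /andP [tj xj]; rewrite sgsg -EFinM lee_fin.
    set c := 2^-1 ^+ `|k - j|%N.
    have L : mk k i * (phi (t k))^-1 <=
        2 * c * (phi0 (tt i) * phi (phi1 (tt i) / phi0 (tt i)))^-1.
      apply: (@LD R (phi0 (tt i)) (phi1 (tt i)) (t k) (phi (t k))
        (phi (phi1 (tt i) / phi0 (tt i))) c) => //.
        by rewrite /c exprn_ge0 // invr_ge0.
      case: (leP k j) => kj.
      - left.
        have [n jE] : exists n : nat, j = k + n%:Z.
          by exists `|j - k|%N; rewrite gez0_abs ?subr_ge0 // addrCA subrr addr0.
        have dE : `|k - j|%N = n by rewrite jE opprD addrA subrr add0r abszN absz_nat.
        rewrite /c dE.
        apply: le_trans (phratio (t j) _ (t0 j) tj) _.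
        rewrite jE; exact: (@sd_chain R _ Hphitd k n).
      - right.
        have [n kE] : exists n : nat, k = j + 1 + n%:Z.
          by exists `|(k - j - 1)%R|%N; rewrite gez0_abs; [ring|lia].
        have dE : `|k - j|%N = n.+1.
          rewrite kE (_ : (j + 1 + n%:Z - j = (n.+1)%:Z)%R) ?absz_nat //.
          by rewrite -addn1 PoszD; ring.
        rewrite /c dE.
        have e : (2 * 2^-1 ^+ n.+1 = 2^-1 ^+ n :> R).
          by rewrite exprS mulrA mulfV // mul1r.
        rewrite e.
        have h1 := phmono _ _ (x0 i) xj.
        have h2 := @si_chain R _ Hphit (j + 1) n.
        rewrite -kE in h2.
        have e2 : 2^-1 ^+ n * (2 ^+ n) = 1 :> R by rewrite -exprMn mulVf // expr1n.
        apply: le_trans h1 _.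
        have := ler_wpM2l (exprn_ge0 n (_ : 0 <= 2^-1 :> R)) h2.
        by rewrite mulrA e2 mul1r; apply; rewrite invr_ge0.
    rewrite normrM (gtr0_norm (w0 i)) wE.
    have A0 : 0 <= `|a i| by [].
    have := ler_wpM2l (mulr_ge0 A0 (_ : 0 <= 2^-1 :> R)) L.
    have E1 : 2^-1 * ((phi (t k))^-1 * (`|a i| * mk k i)) =
      (`|a i| * 2^-1) * (mk k i * (phi (t k))^-1) by ring.
    have E2 : c * (`|a i| * (phi0 (tt i) * phi (phi1 (tt i) / phi0 (tt i)))^-1) =
      (`|a i| * 2^-1) * (2 * c * (phi0 (tt i) * phi (phi1 (tt i) / phi0 (tt i)))^-1).
      set W := (_ * _)^-1; set A := `|a i|; rewrite [in LHS](_ : c = c * (2^-1 * 2)); last by rewrite mulVf ?mulr1. ring.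
    by rewrite E1 E2; apply; rewrite invr_ge0.
  apply: (@le_trans _ _ ((2 * 2 * CQ)%:E * @supw R sg k B)%E).
    rewrite !EFinM -!muleA; apply: lee_wpmul2l => //; apply: lee_wpmul2l => //.
  rewrite (_ : 2 * 2 * CQ = 4 * CQ); last by ring.
  by apply: supwZ; rewrite mulr_gt0.
have D2 : (lnorm p setT B <= (CP * (8 / sg))%:E * lnorm p setT N)%E.
  rewrite EFinM -muleA.
  have -> : ((8 / sg)%:E * lnorm p setT N)%E = lnorm p setT (fun j => (8 / sg)%:E * N j)%E.
    by rewrite lnormZ // divr_gt0.
  apply: HP => //.
    by move=> j; apply: mule_ge0 => //; rewrite lee_fin divr_ge0 // ltW.
  move=> k.
  have [k' [kk' Hk']] : exists k', (`|(k - k')%R|%N <= 1)%N /\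
      (forall i, M k i -> w i <= 2 * (mk k' i * (phi (t k'))^-1)).
    case: (pselect (Z1 k)) => z.
    - exists (k + 1); split.
        by rewrite opprD addrA subrr add0r abszN.
      move=> i /andP [tk xk]; rewrite wE /mk /u0 /u1.
      apply: (@LC R (phi0 (tt i)) (phi1 (tt i)) (t (k + 1)) (phi (t (k + 1)))
        (phi (phi1 (tt i) / phi0 (tt i)))) => //.
      left; split => //.
      have H1 := (HZ k).1 z.
      have H2 := phmono _ _ (t0 k) tk.
      lra.
    - exists k; split; first by rewrite subrr.
      move=> i /andP [tk xk]; rewrite wE /mk /u0 /u1.
      apply: (@LC R (phi0 (tt i)) (phi1 (tt i)) (t k) (phi (t k))
        (phi (phi1 (tt i) / phi0 (tt i)))) => //.
      right; split => //.
      have H1 := (HZ k).2 z.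
      have H2 := phratio _ _ (x0 i) xk.
      lra.
  apply: (@le_trans _ _ (8%:E * N k')%E).
    apply: (@le_trans _ _ (2%:E * lnorm q setT
        (fun i => ((phi (t k'))^-1 * (`|a i| * mk k' i))%:E))%E); last first.
      rewrite (_ : 8%:E = 2%:E * 4%:E)%E; last by rewrite -EFinM; congr (_%:E); ring.
      by rewrite -muleA; apply: lee_wpmul2l => //; exact: KG2.
    rewrite -lnormZ //; last first.
      by move=> i _; rewrite lee_fin; apply: mulr_ge0; [rewrite invr_ge0 ltW|apply: mulr_ge0].
    apply: le_lnorm => // i Mi.
    - rewrite -EFinM lee_fin normrM (gtr0_norm (w0 i)).
      have := ler_wpM2l (normr_ge0 (a i)) (Hk' i Mi).
      rewrite (_ : `|a i| * (2 * (mk k' i * (phi (t k'))^-1)) =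
        2 * ((phi (t k'))^-1 * (`|a i| * mk k' i))) //; ring.
    - by rewrite -EFinM lee_fin; apply: mulr_ge0 => //; apply: mulr_ge0; [rewrite invr_ge0 ltW|apply: mulr_ge0].
  apply: le_trans (@supw_ub R sg k (fun j => (8 / sg)%:E * N j)%E k').
  apply: (@le_trans _ _ ((sg ^+ `|(k - k')%R|%N * (8 / sg))%:E * N k')%E); last first.
    by rewrite EFinM -muleA.
  apply: lee_wpmul2r => //; rewrite lee_fin.
  move: kk'; case: (`|(k - k')%R|%N) => [|[|//]] _.
  - by rewrite expr0 mul1r ler_pdivlMr //; lra.
  - by rewrite expr1 mulrCA mulfV ?gt_eqF // mulr1.
split.
- apply: le_trans D1 _; apply: lee_wpmul2r => //; rewrite lee_fin mulrA.
  by rewrite lerDl mulr_ge0 ?divr_ge0 // ltW.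
- apply: le_trans D2 _; apply: lee_wpmul2r => //; rewrite lee_fin.
  by rewrite lerDr !mulr_ge0 // ltW.
Qed.
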